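(* For all integers $n,a,b$, $$J\mathcal{G}_{n+a}^{(3)}J\mathcal{G}_{n+b}^{(3)}-J\mathcal{G}_{n}^{(3)}J\mathcal{G}_{n+a+b}^{(3)}=\frac{1}{49}\Big\{2^{n+1}\left[\Theta Y_{n+b}(a)-2^{b}Y_{n}(a)\Theta\right]+X_{a}\left[X_{b}\Xi-14X_{b+2}\Omega\right]\Big\}$$ and $$K\mathcal{G}_{n+a}^{(3)}K\mathcal{G}_{n+b}^{(3)}-K\mathcal{G}_{n}^{(3)}K\mathcal{G}_{n+a+b}^{(3)}=2^{n}\left[\Theta Y^{*}_{n+b}(a)-2^{b}Y^{*}_{n}(a)\Theta\right]+X_{a}\left[X_{b}\Xi^{*}-6X_{b+2}\Omega\right],$$ where $Y_{n}(a)=X_{n}(2^{a}\mathbf{A}+X_{a+2}\mathbf{A}-X_{a}\mathbf{B})-X_{n+1}(2^{a}\mathbf{B}+X_{a}\mathbf{A}-X_{a+1}\mathbf{B})$, $Y^{*}_{n}(a)=X_{n}(2^{a}\mathbf{C}+X_{a+2}\mathbf{C}-X_{a}\mathbf{D})-X_{n+1}(2^{a}\mathbf{D}+X_{a}\mathbf{C}-X_{a+1}\mathbf{D})$, $\Xi=\mathbf{A}^2+\mathbf{A}\mathbf{B}+\mathbf{B}^2$ and $\Xi^{*}=\mathbf{C}^2+\mathbf{C}\mathbf{D}+\mathbf{D}^2$.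
   Context: Fix real numbers $\lambda_1,\lambda_2,\lambda_3$. The algebra $\mathbb{H}_{\lambda_1,\lambda_2,\lambda_3}$ of 3-parameter generalized quaternions is the real associative algebra of elements $\psi_0+\psi_1\mathbf{e}_1+\psi_2\mathbf{e}_2+\psi_3\mathbf{e}_3$ ($\psi_i\in\mathbb{R}$) with $\mathbf{e}_1^2=-\lambda_1\lambda_2$, $\mathbf{e}_2^2=-\lambda_1\lambda_3$, $\mathbf{e}_3^2=-\lambda_2\lambda_3$, $\mathbf{e}_1\mathbf{e}_2=-\mathbf{e}_2\mathbf{e}_1=\lambda_1\mathbf{e}_3$, $\mathbf{e}_1\mathbf{e}_3=-\mathbf{e}_3\mathbf{e}_1=-\lambda_2\mathbf{e}_2$, $\mathbf{e}_2\mathbf{e}_3=-\mathbf{e}_3\mathbf{e}_2=\lambda_3\mathbf{e}_1$. The third-order Jacobsthal numbers satisfy $J_0^{(3)}=0$, $J_1^{(3)}=J_2^{(3)}=1$, $J_n^{(3)}=J_{n-1}^{(3)}+J_{n-2}^{(3)}+2J_{n-3}^{(3)}$; the modified third-order Jacobsthal numbers satisfy $K_0^{(3)}=3$, $K_1^{(3)}=1$, $K_2^{(3)}=3$, $K_n^{(3)}=K_{n-1}^{(3)}+K_{n-2}^{(3)}+2K_{n-3}^{(3)}$; both are extended to all integers $n$ by running the recurrence backwards (equivalently by the Binet formulas $J_n^{(3)}=\frac17[2^{n+1}+X_n-2X_{n+1}]$, $K_n^{(3)}=2^n+X_n+2X_{n+1}$, which are rational-valued for negative $n$). For all integers $n$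 define $J\mathcal{G}_n^{(3)}=J_n^{(3)}+J_{n+1}^{(3)}\mathbf{e}_1+J_{n+2}^{(3)}\mathbf{e}_2+J_{n+3}^{(3)}\mathbf{e}_3$ and $K\mathcal{G}_n^{(3)}=K_n^{(3)}+K_{n+1}^{(3)}\mathbf{e}_1+K_{n+2}^{(3)}\mathbf{e}_2+K_{n+3}^{(3)}\mathbf{e}_3$. Here $X_n=0,1,-1$ according as $n\equiv0,1,2\pmod 3$ (for all integers $n$), $\Theta=1+2\mathbf{e}_1+4\mathbf{e}_2+8\mathbf{e}_3$, $\mathbf{A}=1+2\mathbf{e}_1-3\mathbf{e}_2+\mathbf{e}_3$, $\mathbf{B}=2-3\mathbf{e}_1+\mathbf{e}_2+2\mathbf{e}_3$, $\mathbf{C}=1-2\mathbf{e}_1+\mathbf{e}_2+\mathbf{e}_3$, $\mathbf{D}=-2+\mathbf{e}_1+\mathbf{e}_2-2\mathbf{e}_3$, and $\Omega=\lambda_3\mathbf{e}_1+\lambda_2\mathbf{e}_2+\lambda_1\mathbf{e}_3$. *)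

(* Defs.v *)
From HB Require Import structures.
From mathcomp Require Import all_boot all_order all_algebra.
From mathcomp Require Import reals.
Set Implicit Arguments. Unset Strict Implicit. Unset Printing Implicit Defensive.
Import Order.TTheory GRing.Theory Num.Theory.
Local Open Scope ring_scope.

Section Defs.
Variable R : realType.

(* 3-parameter generalized quaternions: psi0 + psi1 e1 + psi2 e2 + psi3 e3 *)
Record quat := Quat { q0 : R; q1 : R; q2 : R; q3 : R }.

Definition qadd (p q : quat) : quat :=
  Quat (q0 p + q0 q) (q1 p + q1 q) (q2 p + q2 q) (q3 p + q3 q).
Definition qscale (c : R) (p : quat) : quat :=
  Quat (c * q0 p) (c * q1 p) (c * q2 p) (c * q3 p).
Definition qsub (p q : quat) : quat := qadd p (qscale (-1) q).

(* Multiplication in H_{l1,l2,l3}, obtained from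
   e1^2=-l1 l2, e2^2=-l1 l3, e3^2=-l2 l3,
   e1e2=-e2e1=l1 e3, e1e3=-e3e1=-l2 e2, e2e3=-e3e2=l3 e1. *)
Definition qmul (l1 l2 l3 : R) (p q : quat) : quat :=
  let a0 := q0 p in let a1 := q1 p in let a2 := q2 p in let a3 := q3 p in
  let b0 := q0 q in let b1 := q1 q in let b2 := q2 q in let b3 := q3 q in
  Quat (a0 * b0 - l1 * l2 * a1 * b1 - l1 * l3 * a2 * b2 - l2 * l3 * a3 * b3)
       (a0 * b1 + a1 * b0 + l3 * (a2 * b3 - a3 * b2))
       (a0 * b2 + a2 * b0 - l2 * (a1 * b3 - a3 * b1))
       (a0 * b3 + a3 * b0 + l1 * (a1 * b2 - a2 * b1)).

(* Third-order sequence u_n = u_{n-1} + u_{n-2} + 2 u_{n-3} with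
   u_0 = c0, u_1 = c1, u_2 = c2, extended to all integers by running the
   recurrence backwards: u_{m-1} = (u_{m+2} - u_{m+1} - u_m) / 2. *)
Fixpoint tri_fwd (c0 c1 c2 : R) (k : nat) : R * R * R :=
  match k with
  | 0%N => (c0, c1, c2)
  | k'.+1 => let: (a, b, c) := tri_fwd c0 c1 c2 k' in (b, c, c + b + 2 * a)
  end.
Fixpoint tri_bwd (c0 c1 c2 : R) (k : nat) : R * R * R :=
  match k with
  | 0%N => (c0, c1, c2)
  | k'.+1 => let: (a, b, c) := tri_bwd c0 c1 c2 k' in ((c - b - a) / 2, a, b)
  end.
Definition tri_seq (c0 c1 c2 : R) (n : int) : R :=
  match n with
  | Posz k => (tri_fwd c0 c1 c2 k).1.1
  | Negz k => (tri_bwd c0 c1 c2 k.+1).1.1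
  end.

Definition Jac (n : int) : R := tri_seq 0 1 1 n.
Definition Kac (n : int) : R := tri_seq 3 1 3 n.

Definition Xs (n : int) : R :=
  if (n %% 3)%Z == 0 then 0 else if (n %% 3)%Z == 1 then 1 else -1.

Definition JG (n : int) : quat := Quat (Jac n) (Jac (n + 1)) (Jac (n + 2)) (Jac (n + 3)).
Definition KG (n : int) : quat := Quat (Kac n) (Kac (n + 1)) (Kac (n + 2)) (Kac (n + 3)).

Definition Theta : quat := Quat 1 2 4 8.
Definition qA : quat := Quat 1 2 (-3) 1.
Definition qB : quat := Quat 2 (-3) 1 2.
Definition qC : quat := Quat 1 (-2) 1 1.
Definition qD : quat := Quat (-2) 1 1 (-2).
Definition Omega (l1 l2 l3 : R) : quat := Quat 0 l3 l2 l1.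

Definition Ygen (P Q : quat) (n a : int) : quat :=
  qsub (qscale (Xs n) (qsub (qadd (qscale ((2:R) ^ a) P) (qscale (Xs (a + 2)) P))
                             (qscale (Xs a) Q)))
       (qscale (Xs (n + 1)) (qsub (qadd (qscale ((2:R) ^ a) Q) (qscale (Xs a) P))
                                  (qscale (Xs (a + 1)) Q))).
Definition Y (n a : int) : quat := Ygen qA qB n a.
Definition Ystar (n a : int) : quat := Ygen qC qD n a.

Definition Xi (l1 l2 l3 : R) : quat :=
  qadd (qadd (qmul l1 l2 l3 qA qA) (qmul l1 l2 l3 qA qB)) (qmul l1 l2 l3 qB qB).
Definition Xistar (l1 l2 l3 : R) : quat :=
  qadd (qadd (qmul l1 l2 l3 qC qC) (qmul l1 l2 l3 qC qD)) (qmul l1 l2 l3 qD qD).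

End Defs.

(* Main.v *)
Require Import Defs.
From HB Require Import structures.
From mathcomp Require Import all_boot all_order all_algebra.
From mathcomp Require Import reals.
From mathcomp Require Import zify ring lra.
Import Order.TTheory GRing.Theory Num.Theory.
Local Open Scope ring_scope.
Section S.
Variable R : realType.
Lemma Xs0E (m : int) : (m %% 3)%Z = 0 -> Xs R m = 0.
Proof. by rewrite /Xs => ->. Qed.
Lemma Xs1E (m : int) : (m %% 3)%Z = 1 -> Xs R m = 1.
Proof. by rewrite /Xs => ->. Qed.
Lemma Xs2E (m : int) : (m %% 3)%Z = 2 -> Xs R m = -1.
Proof. by rewrite /Xs => ->. Qed.
Lemma e1 : (2:R) ^ (1:int) = 2. Proof. by rewrite expr1z. Qed.
Lemma e2 : (2:R) ^ (2:int) = 4. Proof. by rewrite -exprnP expr2 -natrM. Qed.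
Lemma e3 : (2:R) ^ (3:int) = 8. Proof. by rewrite -exprnP !exprS expr0 mulr1 -!natrM. Qed.
Lemma Xs3 (m : int) : Xs R (m + 3) = Xs R m.
Proof. rewrite /Xs. have -> : ((m + 3) %% 3)%Z = (m %% 3)%Z by lia. by []. Qed.
Lemma Xsum (m : int) : Xs R (m + 2) = - Xs R m - Xs R (m + 1).
Proof.
have : ((m %% 3)%Z = 0 \/ (m %% 3)%Z = 1 \/ (m %% 3)%Z = 2) by lia.
case=> [h|[h|h]].
- rewrite (@Xs0E m h) (@Xs1E (m+1)) ?(@Xs2E (m+2)); try lia. ring.
- rewrite (@Xs1E m h) (@Xs2E (m+1)) ?(@Xs0E (m+2)); try lia. ring.
- rewrite (@Xs2E m h) (@Xs0E (m+1)) ?(@Xs1E (m+2)); try lia. ring.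
Qed.

Lemma tri_seqE (c0 c1 c2 : R) (f : int -> R) :
  (forall m, f (m + 3) = f (m + 2) + f (m + 1) + 2 * f m) ->
  f 0 = c0 -> f 1 = c1 -> f 2 = c2 -> forall n, tri_seq c0 c1 c2 n = f n.
Proof.
move=> rec h0 h1 h2.
have fwd : forall k : nat, tri_fwd c0 c1 c2 k = (f k, f (k + 1), f (k + 2)).
  elim=> [|k IH] /=; first by rewrite h0 h1 h2.
  rewrite IH /= intS; congr (_, _, _); first (by congr f; lia); first (by congr f; lia).
  by rewrite -(rec k); congr f; lia.
have bwd : forall k : nat, tri_bwd c0 c1 c2 k = (f (- (k:int)), f (- (k:int) + 1), f (- (k:int) + 2)).
  elim=> [|k IH] /=; first by rewrite h0 h1 h2.
  rewrite IH /= intS.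
  have := rec (- 1 - (k:int)).
  have -> : - 1 - (k:int) + 3 = - (k:int) + 2 by lia.
  have -> : - 1 - (k:int) + 2 = - (k:int) + 1 by lia.
  have -> : - 1 - (k:int) + 1 = - (k:int) by lia.
  move=> ->.
  congr (_, _, _); last (by congr f; lia); last (by congr f; lia).
  have -> : - (1 + (k:int)) = - 1 - (k:int) by lia.
  field. exact: erefl.
case=> k; first by rewrite /tri_seq fwd.
by rewrite /tri_seq bwd NegzE.
Qed.
Lemma p2D (m n : int) : (2:R) ^ (m + n) = 2 ^ m * 2 ^ n.
Proof. by rewrite expfzDr // pnatr_eq0. Qed.
End S.

Ltac xs1 RR mm :=
  first [ let e := constr:(@Xs0E RR mm) in rewrite e; [|lia]
        | let e := constr:(@Xs1E RR mm) in rewrite e; [|lia]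
        | let e := constr:(@Xs2E RR mm) in rewrite e; [|lia] ].
Ltac xs := repeat match goal with |- context[Xs ?RR ?mm] => xs1 RR mm end.
Ltac pw := rewrite ?p2D ?e1 ?e2 ?e3.
Lemma mod3 (m : int) : (m %% 3)%Z = 0 \/ (m %% 3)%Z = 1 \/ (m %% 3)%Z = 2.
Proof. lia. Qed.

Definition fJ (R : realType) (k : int) : R := (2 ^ (k + 1) + Xs R k - 2 * Xs R (k + 1)) / 7.
Definition fK (R : realType) (k : int) : R := 2 ^ k + Xs R k + 2 * Xs R (k + 1).

Lemma JacE (R : realType) (m : int) : Jac R m = fJ R m.
Proof.
apply: tri_seqE; rewrite /fJ.
- move=> k; case: (mod3 k) => [h|[h|h]]; xs; pw; field; exact: erefl.
- xs; pw; field; exact: erefl.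
- xs; pw; field; exact: erefl.
- xs; pw; field; exact: erefl.
Qed.

Lemma KacE (R : realType) (m : int) : Kac R m = fK R m.
Proof.
apply: tri_seqE; rewrite /fK.
- move=> k; case: (mod3 k) => [h|[h|h]]; xs; pw; ring.
- xs; pw; rewrite expr0z; ring.
- xs; pw; ring.
- xs; pw; ring.
Qed.

Lemma JacE' (R : realType) (m : int) :
  Jac R m = (1/7) * (2 ^ m * 2 + Xs R m - 2 * Xs R (m + 1)).
Proof. by rewrite JacE /fJ p2D e1 mulrC mul1r. Qed.

Section Q.
Variable R : realType.
Implicit Types p q : quat R.
Lemma quat_ext p q : q0 p = q0 q -> q1 p = q1 q -> q2 p = q2 q -> q3 p = q3 q -> p = q.
Proof. by case: p; case: q => /= ? ? ? ? ? ? ? ? -> -> -> ->. Qed.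
Lemma qQ0 (x y z w : R) : q0 (Quat x y z w) = x. Proof. by []. Qed.
Lemma qadd0 p q : q0 (qadd p q) = q0 p + q0 q. Proof. by []. Qed.
Lemma qscale0 (k : R) p : q0 (qscale k p) = k * q0 p. Proof. by []. Qed.
Lemma qsub0 p q : q0 (qsub p q) = q0 p - q0 q. Proof. by rewrite /qsub /qadd /qscale /= mulN1r. Qed.
Lemma qQ1 (x y z w : R) : q1 (Quat x y z w) = y. Proof. by []. Qed.
Lemma qadd1 p q : q1 (qadd p q) = q1 p + q1 q. Proof. by []. Qed.
Lemma qscale1 (k : R) p : q1 (qscale k p) = k * q1 p. Proof. by []. Qed.
Lemma qsub1 p q : q1 (qsub p q) = q1 p - q1 q. Proof. by rewrite /qsub /qadd /qscale /= mulN1r. Qed.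
Lemma qQ2 (x y z w : R) : q2 (Quat x y z w) = z. Proof. by []. Qed.
Lemma qadd2 p q : q2 (qadd p q) = q2 p + q2 q. Proof. by []. Qed.
Lemma qscale2 (k : R) p : q2 (qscale k p) = k * q2 p. Proof. by []. Qed.
Lemma qsub2 p q : q2 (qsub p q) = q2 p - q2 q. Proof. by rewrite /qsub /qadd /qscale /= mulN1r. Qed.
Lemma qQ3 (x y z w : R) : q3 (Quat x y z w) = w. Proof. by []. Qed.
Lemma qadd3 p q : q3 (qadd p q) = q3 p + q3 q. Proof. by []. Qed.
Lemma qscale3 (k : R) p : q3 (qscale k p) = k * q3 p. Proof. by []. Qed.
Lemma qsub3 p q : q3 (qsub p q) = q3 p - q3 q. Proof. by rewrite /qsub /qadd /qscale /= mulN1r. Qed.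
Lemma qmul0 (l1 l2 l3 : R) p q : q0 (qmul l1 l2 l3 p q) = q0 p * q0 q - l1 * l2 * q1 p * q1 q - l1 * l3 * q2 p * q2 q - l2 * l3 * q3 p * q3 q. Proof. by []. Qed.
Lemma qmul1 (l1 l2 l3 : R) p q : q1 (qmul l1 l2 l3 p q) = q0 p * q1 q + q1 p * q0 q + l3 * (q2 p * q3 q - q3 p * q2 q). Proof. by []. Qed.
Lemma qmul2 (l1 l2 l3 : R) p q : q2 (qmul l1 l2 l3 p q) = q0 p * q2 q + q2 p * q0 q - l2 * (q1 p * q3 q - q3 p * q1 q). Proof. by []. Qed.
Lemma qmul3 (l1 l2 l3 : R) p q : q3 (qmul l1 l2 l3 p q) = q0 p * q3 q + q3 p * q0 q + l1 * (q1 p * q2 q - q2 p * q1 q). Proof. by []. Qed.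
End Q.
Definition qsimp := (qQ0, qadd0, qscale0, qsub0, qmul0, qQ1, qadd1, qscale1, qsub1, qmul1, qQ2, qadd2, qscale2, qsub2, qmul2, qQ3, qadd3, qscale3, qsub3, qmul3).
Lemma partJ (R : realType) (l1 l2 l3 : R) (n a b : int) :
  qsub (qmul l1 l2 l3 (JG R (n + a)) (JG R (n + b)))
       (qmul l1 l2 l3 (JG R n) (JG R (n + a + b)))
  = qscale (1 / 49)
      (qadd (qscale ((2:R) ^ (n + 1))
               (qsub (qmul l1 l2 l3 (Theta R) (Y R (n + b) a))
                     (qscale ((2:R) ^ b) (qmul l1 l2 l3 (Y R n a) (Theta R)))))
            (qscale (Xs R a)
               (qsub (qscale (Xs R b) (Xi l1 l2 l3))
                     (qscale (14 * Xs R (b + 2)) (Omega l1 l2 l3))))).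
Proof.
have c49 : (1 / 49 : R) = (1/7) * (1/7) by field.
rewrite c49 /JG !JacE' /Y /Ygen /Xi /Theta /qA /qB /Omega; pw.
set c := (1 / 7 : R).
case: (mod3 n) => [hn|[hn|hn]]; case: (mod3 a) => [ha|[ha|ha]];
  case: (mod3 b) => [hb|[hb|hb]]; xs;
  (apply: quat_ext; cbn [q0 q1 q2 q3 qmul qadd qsub qscale]; ring).
Qed.

Lemma partK (R : realType) (l1 l2 l3 : R) (n a b : int) :
  qsub (qmul l1 l2 l3 (KG R (n + a)) (KG R (n + b)))
       (qmul l1 l2 l3 (KG R n) (KG R (n + a + b)))
  = qadd (qscale ((2:R) ^ n)
            (qsub (qmul l1 l2 l3 (Theta R) (Ystar R (n + b) a))
                  (qscale ((2:R) ^ b) (qmul l1 l2 l3 (Ystar R n a) (Theta R)))))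
         (qscale (Xs R a)
            (qsub (qscale (Xs R b) (Xistar l1 l2 l3))
                  (qscale (6 * Xs R (b + 2)) (Omega l1 l2 l3)))).
Proof.
rewrite /KG !KacE /fK /Ystar /Ygen /Xistar /Theta /qC /qD /Omega; pw.
case: (mod3 n) => [hn|[hn|hn]]; case: (mod3 a) => [ha|[ha|ha]];
  case: (mod3 b) => [hb|[hb|hb]]; xs;
  (apply: quat_ext; cbn [q0 q1 q2 q3 qmul qadd qsub qscale]; ring).
Qed.

Theorem theorem3p1 (R : realType) (l1 l2 l3 : R) (n a b : int) :
  qsub (qmul l1 l2 l3 (JG R (n + a)) (JG R (n + b)))
       (qmul l1 l2 l3 (JG R n) (JG R (n + a + b)))
  = qscale (1 / 49)
      (qadd (qscale ((2:R) ^ (n + 1))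
               (qsub (qmul l1 l2 l3 (Theta R) (Y R (n + b) a))
                     (qscale ((2:R) ^ b) (qmul l1 l2 l3 (Y R n a) (Theta R)))))
            (qscale (Xs R a)
               (qsub (qscale (Xs R b) (Xi l1 l2 l3))
                     (qscale (14 * Xs R (b + 2)) (Omega l1 l2 l3)))))
  /\
  qsub (qmul l1 l2 l3 (KG R (n + a)) (KG R (n + b)))
       (qmul l1 l2 l3 (KG R n) (KG R (n + a + b)))
  = qadd (qscale ((2:R) ^ n)
            (qsub (qmul l1 l2 l3 (Theta R) (Ystar R (n + b) a))
                  (qscale ((2:R) ^ b) (qmul l1 l2 l3 (Ystar R n a) (Theta R)))))
         (qscale (Xs R a)
            (qsub (qscale (Xs R b) (Xistar l1 l2 l3))
                  (qscale (6 * Xs R (b + 2)) (Omega l1 l2 l3)))).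
Proof.
split; [exact: partJ | exact: partK].
Qed.
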